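(* Let $d,n\ge1$ be integers and let $X=I_1\cup\dots\cup I_d$ be the disjoint union of $d$ copies $I_1,\dots,I_d$ of the unit interval $[0,1]$. Let $H$ be the (infinite) family of all sets $e=e^1\cup\dots\cup e^d\subseteq X$, with each $e^j$ empty or a closed interval in $I_j$, whose total length $|e|=\sum_j|e^j|$ satisfies $|e|>\frac1n$. Then: (1) every set $C\subseteq X$ meeting every member of $H$ satisfies $|C|\ge nd^2-d$; (2) for every finitely supported function $\alpha:H\to\mathbb{R}_{\ge0}$ such that $\sum_{e\in H,\,x\in e}\alpha(e)\le1$ for every $x\in X$, one has $\sum_{e\in H}\alpha(e)< nd$ (when $\alpha\not\equiv0$) and in any case $\sum_{e}\alpha(e)\le nd$.
   Context: $|e^j|$ denotes the length of the interval $e^j$ (zero if empty). *)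

(* Defs.v *)
From Stdlib Require Import Reals Lra List.
Import ListNotations.
Open Scope R_scope.

(* A point of X = I_0 ⊔ ... ⊔ I_{d-1}: a pair (j, x) with j < d, x ∈ [0,1]. *)
Definition point := (nat * R)%type.
Definition in_X (d : nat) (p : point) : Prop :=
  (fst p < d)%nat /\ 0 <= snd p <= 1.

(* A set e = e^0 ∪ ... ∪ e^{d-1}: a list of length d whose j-th entry is
   None (e^j empty) or Some (a,b) with 0 <= a <= b <= 1 (e^j = [a,b] ⊆ I_j).
   This representation is unique for each such set. *)
Definition edge := list (option (R * R)).

Definition comp_ok (o : option (R * R)) : Prop :=
  match o with
  | None => True
  | Some (a, b) => 0 <= a /\ a <= b /\ b <= 1
  end.

Definition valid_edge (d : nat) (e : edge) : Prop :=
  length e = d /\ Forall comp_ok e.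

Definition comp_len (o : option (R * R)) : R :=
  match o with None => 0 | Some (a, b) => b - a end.

Definition elen (e : edge) : R :=
  fold_right (fun o acc => comp_len o + acc) 0 e.

Definition inH (d n : nat) (e : edge) : Prop :=
  valid_edge d e /\ elen e > 1 / INR n.

Definition memb (p : point) (e : edge) : bool :=
  match nth_error e (fst p) with
  | Some (Some (a, b)) =>
      if Rle_dec a (snd p) then (if Rle_dec (snd p) b then true else false)
      else false
  | _ => false
  end.

Definition total (alpha : edge -> R) (s : list edge) : R :=
  fold_right (fun e acc => alpha e + acc) 0 s.

Definition load (alpha : edge -> R) (s : list edge) (p : point) : R :=
  fold_right (fun e acc => (if memb p e then alpha e else 0) + acc) 0 s.

(* Main.v *)
Require Import Defs.
From Stdlib Require Import Reals Lra List.
Import ListNotations.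
Open Scope R_scope.
From Stdlib Require Import Lia Classical ClassicalEpsilon.

Fixpoint rsum (f : nat -> R) (m : nat) : R :=
  match m with O => 0 | S m' => f O + rsum (fun j => f (S j)) m' end.

Lemma rsum_ext : forall m f g, (forall j, (j < m)%nat -> f j = g j) -> rsum f m = rsum g m.
Proof. induction m; intros f g H; simpl; auto.
  rewrite (H O) by lia. f_equal. apply IHm. intros; apply H; lia. Qed.

Lemma rsum_le : forall m f g, (forall j, (j < m)%nat -> f j <= g j) -> rsum f m <= rsum g m.
Proof. induction m; intros f g H; simpl. lra.
  assert (f O <= g O) by (apply H; lia).
  assert (rsum (fun j => f (S j)) m <= rsum (fun j => g (S j)) m) by (apply IHm; intros; apply H; lia). lra. Qed.

Lemma rsum_last : forall m f, rsum f (S m) = rsum f m + f m.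
Proof. induction m; intros f; simpl. ring. simpl in IHm. rewrite (IHm (fun j => f (S j))). ring. Qed.

Lemma rsum_scal : forall m c f, rsum (fun j => c * f j) m = c * rsum f m.
Proof. induction m; intros; simpl. ring. rewrite (IHm c (fun j => f (S j))). ring. Qed.

Lemma rsum_const : forall m c, rsum (fun _ => c) m = INR m * c.
Proof. induction m; intros; simpl rsum. simpl; ring. rewrite IHm, S_INR. ring. Qed.

Lemma rsum_aff : forall m c b f, rsum (fun j => c * f j - b) m = c * rsum f m - INR m * b.
Proof. induction m; intros; simpl rsum. simpl; ring. rewrite (IHm c b (fun j => f (S j))), S_INR. ring. Qed.

Lemma rsum_nonneg : forall m f, (forall j, 0 <= f j) -> 0 <= rsum f m.
Proof. intros. replace 0 with (rsum (fun _ => 0) m). apply rsum_le; auto.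
  rewrite rsum_const; ring. Qed.

Definition lsum (h : edge -> R) (s : list edge) : R := fold_right (fun e acc => h e + acc) 0 s.

Lemma lsum_le : forall s h h', (forall e, In e s -> h e <= h' e) -> lsum h s <= lsum h' s.
Proof. induction s; intros; simpl. lra.
  assert (h a <= h' a) by (apply H; simpl; auto).
  assert (lsum h s <= lsum h' s) by (apply IHs; intros; apply H; simpl; auto). lra. Qed.

Lemma lsum_ge_mem : forall s h e0, (forall e, In e s -> 0 <= h e) -> In e0 s -> h e0 <= lsum h s.
Proof. induction s; intros h e0 H Hin; simpl in *. contradiction.
  destruct Hin as [<-|Hin].
  - assert (0 <= lsum h s). { replace 0 with (lsum (fun _ => 0) s). apply lsum_le; auto.
      clear. induction s; simpl; auto. rewrite IHs; ring. } lra.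
  - assert (0 <= h a) by auto. assert (h e0 <= lsum h s) by (apply IHs; auto). lra. Qed.

Lemma exch : forall s m (g : nat -> edge -> R),
  rsum (fun k => lsum (g k) s) m = lsum (fun e => rsum (fun k => g k e) m) s.
Proof. induction s; intros; simpl.
  - change (rsum (fun _ => 0) m = 0). rewrite rsum_const; ring.
  - rewrite <- IHs. clear IHs. revert g; induction m; intros; simpl. ring.
    rewrite (IHm (fun k => g (S k))). ring. Qed.

Definition gind (x y : R) (k : nat) : R :=
  if Rle_dec x (INR k) then if Rle_dec (INR k) y then 1 else 0 else 0.

Lemma ind_nonneg : forall x y k, 0 <= gind x y k.
Proof. intros; unfold gind; repeat destruct Rle_dec; lra. Qed.

Lemma count_lb : forall M x y z, 0 <= x -> z <= y -> z <= INR M + 1 ->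
  rsum (gind x y) (S M) >= z - x - 1.
Proof. induction M; intros x y z Hx Hzy HzM.
  - simpl in *. unfold gind; simpl. repeat destruct Rle_dec; lra.
  - rewrite rsum_last. rewrite S_INR in HzM.
    pose proof (ind_nonneg x y (S M)).
    destruct (Rle_dec z (INR M + 1)).
    + pose proof (IHM x y z Hx Hzy r). lra.
    + pose proof (IHM x y (INR M + 1) Hx ltac:(lra) ltac:(lra)).
      pose proof (rsum_nonneg (S M) (gind x y) (ind_nonneg x y)).
      unfold gind in *. rewrite S_INR in *.
      repeat destruct Rle_dec; lra. Qed.

Lemma rsum_plus : forall m f g, rsum (fun j => f j + g j) m = rsum f m + rsum g m.
Proof. induction m; intros; simpl. ring. rewrite (IHm (fun j => f (S j)) (fun j => g (S j))). ring. Qed.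

Lemma rsum_delta : forall m i, rsum (fun j => if Nat.eqb i j then 1 else 0) m = if Nat.ltb i m then 1 else 0.
Proof. induction m; intros i; simpl rsum. destruct i; reflexivity.
  destruct i.
  - change (1 + rsum (fun _ => 0) m = 1). rewrite rsum_const; ring.
  - change (0 + rsum (fun j => if Nat.eqb i j then 1 else 0) m = if Nat.ltb i m then 1 else 0).
    rewrite IHm. ring. Qed.

Lemma hm : forall m a M, 0 < M -> (forall j, 0 < a j) ->
  rsum (fun j => / a j) m >= 2 * INR m / M - rsum a m / (M*M).
Proof. induction m; intros a M HM Ha; simpl rsum.
  - apply Rle_ge. replace (2 * INR 0 / M - 0 / (M*M)) with 0 by (simpl; field; lra). lra.
  - specialize (IHm (fun j => a (S j)) M HM (fun j => Ha (S j))).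
    assert (/ a O >= 2 / M - a O / (M*M)).
    { pose proof (Ha O) as H0. set (q := / a O). assert (a O * q = 1) by (unfold q; field; lra).
      assert (0 <= (M - a O)^2 * q) by (apply Rmult_le_pos; [apply pow2_ge_0| unfold q; left; apply Rinv_0_lt_compat; lra]).
      apply Rle_ge. apply (Rmult_le_reg_r (M*M)); [nra|].
      replace ((2/M - a O/(M*M))*(M*M)) with (2*M - a O) by (field; lra).
      assert ((M - a O)^2 * q = M*M*q - 2*M + a O) by (unfold q; field; lra). lra. }
    rewrite S_INR. unfold Rdiv in *. lra. Qed.

Lemma gap (L : R) (HL : 0 <= L) : forall N (l : list R) u v, (length l <= N)%nat ->
  INR (length l + 1) * L < v - u ->
  exists a, u <= a /\ a + L <= v /\ forall x, In x l -> ~ (a <= x <= a + L).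
Proof.
  induction N; intros l u v Hlen Hlt.
  - destruct l; [|simpl in Hlen; lia]. exists u. simpl in Hlt. split; [lra|split; [lra|]].
    intros x [].
  - destruct (classic (exists y, In y l /\ u <= y <= u + L)) as [[y [Hy Hyu]]|Hno].
    + destruct (in_split _ _ Hy) as [l1 [l2 ->]].
      set (k := length (l1 ++ l2)).
      assert (Hk : length (l1 ++ y :: l2) = S k) by (unfold k; rewrite !length_app; simpl; lia).
      rewrite Hk in Hlt, Hlen.
      set (sl := v - u - INR (S k + 1) * L) in *.
      assert (Hsl : 0 < sl) by (unfold sl; lra).
      destruct (IHN (l1 ++ l2) (y + sl / 2) v ltac:(unfold k in Hlen; lia)) as [a [Ha1 [Ha2 Ha3]]].
      { fold k. unfold sl. rewrite !plus_INR, !S_INR in *. simpl INR in *. lra. }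
      exists a. split; [lra|split; [lra|]].
      intros x Hx. apply in_app_iff in Hx. destruct Hx as [Hx|[<-|Hx]].
      * apply Ha3. apply in_app_iff; auto.
      * lra.
      * apply Ha3. apply in_app_iff; auto.
    + exists u. assert (1 <= INR (length l + 1)) by (rewrite plus_INR; simpl; pose proof (pos_INR (length l)); lra).
      split; [lra|split; [nra|]].
      intros x Hx Hx2. apply Hno. eauto.
Qed.

Definition cnt (C : list point) (j : nat) : nat :=
  length (filter (fun p : point => Nat.eqb (fst p) j) C).

Lemma cnt_sum : forall d C, Forall (in_X d) C -> rsum (fun j => INR (cnt C j)) d = INR (length C).
Proof. intros d C; induction C as [|p C IH]; intros HF.
  - unfold cnt; simpl. change (rsum (fun _ => 0) d = 0). rewrite rsum_const; ring.
  - inversion HF as [|? ? Hp HF']; subst.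
    rewrite (rsum_ext d _ (fun j => (if Nat.eqb (fst p) j then 1 else 0) + INR (cnt C j))).
    + rewrite rsum_plus, rsum_delta, IH by auto. destruct Hp as [Hp _].
      apply Nat.ltb_lt in Hp. rewrite Hp. simpl length. rewrite S_INR. ring.
    + intros j _. unfold cnt; simpl. destruct (Nat.eqb (fst p) j); simpl length; try rewrite S_INR; ring.
Qed.

Lemma choice_nat : forall (Q : nat -> R -> Prop), (forall j, exists a, Q j a) -> exists A, forall j, Q j (A j).
Proof. intros Q H. exists (fun j => proj1_sig (constructive_indefinite_description _ (H j))).
  intros j. exact (proj2_sig (constructive_indefinite_description _ (H j))). Qed.

Lemma elen_map : forall m s0 (f : nat -> option (R*R)),
  elen (map f (seq s0 m)) = rsum (fun j => comp_len (f (s0 + j)%nat)) m.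
Proof. induction m; intros; simpl. reflexivity. rewrite IHm. rewrite Nat.add_0_r. f_equal.
  apply rsum_ext. intros. rewrite Nat.add_succ_r. reflexivity. Qed.

Lemma part1 d n (hd : (1 <= d)%nat) (hn : (1 <= n)%nat) (C : list point) :
  Forall (in_X d) C -> (forall e, inH d n e -> exists p, In p C /\ memb p e = true) ->
  (length C + d >= n * d * d)%nat.
Proof.
  intros HF Hhit.
  destruct (Compare_dec.le_lt_dec (n*d*d) (length C + d)) as [|Hlt]; [lia|exfalso].
  set (a := fun j => INR (cnt C j) + 1).
  assert (Ha : forall j, 0 < a j) by (intros; unfold a; pose proof (pos_INR (cnt C j)); lra).
  set (S := rsum (fun j => / a j) d).
  assert (HnR : 0 < INR n) by (apply lt_0_INR; lia).
  assert (HdR : 0 < INR d) by (apply lt_0_INR; lia).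
  assert (HS : S > / INR n).
  { pose proof (hm d a (INR n * INR d) ltac:(nra) Ha) as H.
    assert (Hra : rsum a d = INR (length C) + INR d).
    { unfold a. rewrite rsum_plus, cnt_sum by auto. rewrite rsum_const. ring. }
    rewrite Hra in H.
    apply lt_INR in Hlt. rewrite !mult_INR, plus_INR in Hlt.
    replace (2 * INR d / (INR n * INR d)) with (2 / INR n) in H by (field; lra).
    assert ((INR (length C) + INR d) / (INR n * INR d * (INR n * INR d)) < / INR n).
    { apply (Rmult_lt_reg_r (INR n * INR d * (INR n * INR d))). repeat apply Rmult_lt_0_compat; auto.
      replace ((INR (length C) + INR d) / (INR n * INR d * (INR n * INR d)) * (INR n * INR d * (INR n * INR d)))
        with (INR (length C) + INR d) by (field; lra).
      replace (/ INR n * (INR n * INR d * (INR n * INR d))) with (INR n * INR d * INR d) by (field; lra). lra. }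
    unfold S. unfold Rdiv in *. lra. }
  assert (HSpos : 0 < S) by (pose proof (Rinv_0_lt_compat _ HnR); lra).
  set (t := (/ INR n + S) / (2 * S)).
  assert (Ht1 : t < 1) by (unfold t; apply (Rmult_lt_reg_r (2*S)); [lra|]; unfold Rdiv; rewrite Rmult_assoc, Rinv_l; lra).
  assert (Ht0 : 0 < t) by (unfold t; apply Rdiv_lt_0_compat; pose proof (Rinv_0_lt_compat _ HnR); lra).
  assert (HtS : t * S > / INR n) by (unfold t; replace ((/ INR n + S) / (2 * S) * S) with ((/ INR n + S)/2) by (field; lra); lra).
  set (L := fun j => t / a j).
  set (l := fun j => map snd (filter (fun p : point => Nat.eqb (fst p) j) C)).
  assert (Hex : forall j, exists A, 0 <= A /\ A + L j <= 1 /\ forall x, In x (l j) -> ~ (A <= x <= A + L j)).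
  { intros j. assert (HL : 0 <= L j) by (unfold L; left; apply Rdiv_lt_0_compat; auto).
    destruct (gap (L j) HL (length (l j)) (l j) 0 1 (le_n _)) as [A [HA1 [HA2 HA3]]].
    - unfold l. rewrite length_map. fold (cnt C j). rewrite plus_INR. simpl INR.
      unfold L. change (INR (length (filter (fun p : point => Nat.eqb (fst p) j) C)) + 1) with (a j).
      replace (a j * (t / a j)) with t by (field; pose proof (Ha j); lra). lra.
    - exists A. auto. }
  destruct (choice_nat _ Hex) as [Af HAf].
  set (e := map (fun j => Some (Af j, Af j + L j)) (seq 0 d)).
  destruct (Hhit e) as [[j x] [Hin Hm]].
  - split. split.
    + unfold e. rewrite length_map, length_seq. auto.
    + apply Forall_forall. intros o Ho. unfold e in Ho. apply in_map_iff in Ho. destruct Ho as [j [<- _]].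
      simpl. destruct (HAf j) as [H1 [H2 _]].
      assert (0 <= L j) by (unfold L; left; apply Rdiv_lt_0_compat; auto). lra.
    + unfold e. rewrite elen_map. simpl.
      rewrite (rsum_ext d _ (fun j => t * / a j)) by (intros; unfold L; simpl; unfold Rdiv; ring).
      rewrite rsum_scal. fold S. unfold Rdiv. lra.
  - rewrite Forall_forall in HF. destruct (HF _ Hin) as [Hj _]. simpl in Hj.
    unfold memb in Hm. simpl in Hm. unfold e in Hm. rewrite nth_error_map, nth_error_seq in Hm.
    assert (Hj' : Nat.ltb j d = true) by (apply Nat.ltb_lt; auto). rewrite Hj' in Hm. simpl in Hm.
    destruct (HAf j) as [_ [_ H3]].
    apply (H3 x).
    + unfold l. apply in_map_iff. exists (j, x). split; auto. apply filter_In. split; auto. simpl. apply Nat.eqb_refl.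
    + destruct Rle_dec; [|discriminate]. destruct Rle_dec; [|discriminate]. lra.
Qed.

Lemma load_eq : forall alpha s p, load alpha s p = lsum (fun e => alpha e * (if memb p e then 1 else 0)) s.
Proof. intros alpha s p; induction s; unfold load, lsum in *; simpl; auto.
  rewrite IHs. destruct (memb p a); ring. Qed.

Lemma lsum_ext : forall s h h', (forall e, h e = h' e) -> lsum h s = lsum h' s.
Proof. induction s; intros; simpl; auto. rewrite H. f_equal. auto. Qed.

Lemma lsum_aff : forall s (alpha el : edge -> R) c b,
  lsum (fun e => alpha e * (c * el e - b)) s = c * lsum (fun e => alpha e * el e) s - b * lsum alpha s.
Proof. induction s; intros; simpl. ring. rewrite IHs. ring. Qed.

Lemma elen_nth : forall e, elen e = rsum (fun j => comp_len (nth j e None)) (length e).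
Proof. induction e; simpl; auto. rewrite IHe. reflexivity. Qed.

Lemma div_le_iff : forall N a k, 0 < N -> (a <= k / N <-> N * a <= k).
Proof. intros N a k HN. set (q := k / N). assert (k = N * q) by (unfold q; field; lra).
  rewrite H. split; intros; nra. Qed.
Lemma div_le_iff2 : forall N b k, 0 < N -> (k / N <= b <-> k <= N * b).
Proof. intros N b k HN. set (q := k / N). assert (k = N * q) by (unfold q; field; lra).
  rewrite H. split; intros; nra. Qed.

Lemma cnt_lb : forall d N e, (1 <= N)%nat -> valid_edge d e ->
  rsum (fun j => rsum (fun k => if memb (j, INR k / INR N) e then 1 else 0) (S N)) d >= INR N * elen e - INR d.
Proof.
  intros d N e HN [Hlen Hok].
  assert (HNR : 0 < INR N) by (apply lt_0_INR; lia).
  rewrite elen_nth, Hlen. rewrite <- (Rmult_1_r (INR d)), <- rsum_aff. apply Rle_ge. apply rsum_le. intros j Hj.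
  assert (Hnth : nth_error e j = Some (nth j e None)) by (apply nth_error_nth'; lia).
  assert (Hc : comp_ok (nth j e None)) by (rewrite Forall_forall in Hok; apply Hok; apply nth_In; lia).
  destruct (nth j e None) as [[a b]|] eqn:Ho.
  - simpl in Hc. destruct Hc as [Ha [Hab Hb]].
    rewrite (rsum_ext (S N) _ (gind (INR N * a) (INR N * b))).
    + pose proof (count_lb N (INR N * a) (INR N * b) (INR N * b) ltac:(nra) ltac:(lra) ltac:(nra)).
      simpl comp_len. lra.
    + intros k _. unfold memb. simpl fst; simpl snd. rewrite Hnth. unfold gind.
      pose proof (div_le_iff (INR N) a (INR k) HNR). pose proof (div_le_iff2 (INR N) b (INR k) HNR).
      repeat destruct Rle_dec; tauto.
  - rewrite (rsum_ext (S N) _ (fun _ => 0)).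
    + rewrite rsum_const. simpl comp_len. lra.
    + intros k _. unfold memb. simpl fst. rewrite Hnth. reflexivity.
Qed.

Lemma Rdiv_le_0_compat : forall a b, 0 <= a -> 0 < b -> 0 <= a / b.
Proof. intros; unfold Rdiv; apply Rmult_le_pos; auto; left; apply Rinv_0_lt_compat; auto. Qed.

Lemma part2 d n (hd : (1 <= d)%nat) (hn : (1 <= n)%nat) (alpha : edge -> R) (s : list edge) :
  (forall e, In e s -> inH d n e) ->
  (forall e, inH d n e -> 0 <= alpha e) ->
  (forall e, inH d n e -> ~ In e s -> alpha e = 0) ->
  (forall p, in_X d p -> load alpha s p <= 1) ->
  total alpha s <= INR (n * d) /\
  ((exists e, inH d n e /\ alpha e <> 0) -> total alpha s < INR (n * d)).
Proof.
  intros Hs Hpos Hzero Hload.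
  set (A := lsum alpha s). change (total alpha s) with A.
  set (W := lsum (fun e => alpha e * elen e) s).
  assert (HnR : 0 < INR n) by (apply lt_0_INR; lia).
  assert (HdR : 0 < INR d) by (apply lt_0_INR; lia).
  assert (Hapos : forall e, In e s -> 0 <= alpha e) by (intros; apply Hpos; auto).
  assert (HA : 0 <= A).
  { unfold A. replace 0 with (lsum (fun _ => 0) s). apply lsum_le; auto.
    clear. induction s; simpl; auto. rewrite IHs; ring. }
  assert (Hkey : forall N, (1 <= N)%nat -> INR N * W - INR d * A <= INR d * (INR N + 1)).
  { intros N HN. assert (HNR : 0 < INR N) by (apply lt_0_INR; lia).
    set (G := rsum (fun j => rsum (fun k => load alpha s (j, INR k / INR N)) (S N)) d).
    assert (HG1 : G <= INR d * (INR N + 1)).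
    { unfold G. rewrite <- S_INR. rewrite <- (Rmult_1_r (INR (S N))), <- rsum_const, <- rsum_const.
      apply rsum_le. intros j Hj. apply rsum_le. intros k Hk. apply Hload.
      split; simpl; auto. split.
      - apply Rdiv_le_0_compat; [apply pos_INR|auto].
      - apply div_le_iff2; auto. rewrite Rmult_1_r. apply le_INR. lia. }
    assert (HG2 : G = lsum (fun e => alpha e *
       rsum (fun j => rsum (fun k => if memb (j, INR k / INR N) e then 1 else 0) (S N)) d) s).
    { unfold G. rewrite (rsum_ext d _ (fun j => lsum (fun e => rsum (fun k =>
          alpha e * (if memb (j, INR k / INR N) e then 1 else 0)) (S N)) s)).
      - rewrite exch. apply lsum_ext. intros e. rewrite <- rsum_scal. apply rsum_ext. intros j _.
        apply rsum_scal.
      - intros j _. rewrite <- exch. apply rsum_ext. intros k _. apply load_eq. }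
    assert (HG3 : lsum (fun e => alpha e * (INR N * elen e - INR d)) s <= G).
    { rewrite HG2. apply lsum_le. intros e He. apply Rmult_le_compat_l; auto.
      apply Rge_le. apply cnt_lb; auto. apply Hs; auto. }
    rewrite lsum_aff in HG3. fold A W in HG3. lra. }
  assert (HW : W <= INR d).
  { destruct (Rle_dec W (INR d)) as [|Hc]; auto. exfalso.
    destruct (INR_unbounded ((INR d + INR d * A) / (W - INR d) + 1)) as [N HN].
    assert (HN1 : (1 <= N)%nat).
    { destruct N; [|lia]. simpl in HN. assert (0 <= (INR d + INR d * A) / (W - INR d)).
      { apply Rdiv_le_0_compat; nra. } lra. }
    specialize (Hkey N HN1).
    assert ((INR d + INR d * A) / (W - INR d) * (W - INR d) = INR d + INR d * A) by (field; lra).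
    nra. }
  assert (HWA : forall e0, In e0 s -> alpha e0 * (elen e0 - / INR n) <= W - A / INR n).
  { intros e0 He0.
    replace (W - A / INR n) with (lsum (fun e => alpha e * (1 * elen e - / INR n)) s).
    - rewrite <- (Rmult_1_l (elen e0)). apply (lsum_ge_mem s (fun e => alpha e * (1 * elen e - / INR n)) e0); auto.
      intros e He. apply Rmult_le_pos; auto. destruct (Hs e He) as [_ Hl]. unfold Rdiv in Hl. lra.
    - rewrite lsum_aff. fold W A. unfold Rdiv. ring. }
  assert (HAW : A / INR n <= W).
  { destruct s as [|e0 s'].
    - unfold A, W; simpl. unfold Rdiv. lra.
    - pose proof (HWA e0 (or_introl eq_refl)).
      assert (0 <= alpha e0 * (elen e0 - / INR n)).
      { apply Rmult_le_pos; auto. apply Hapos; simpl; auto. destruct (Hs e0 (or_introl eq_refl)) as [_ Hl].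
        unfold Rdiv in Hl. lra. }
      lra. }
  assert (Hconv : A = INR n * (A / INR n)) by (field; lra).
  rewrite mult_INR. split.
  - rewrite Hconv. apply Rmult_le_compat_l; lra.
  - intros [e [He Hne]].
    assert (Hin : In e s) by (destruct (classic (In e s)); auto; exfalso; apply Hne; apply Hzero; auto).
    pose proof (HWA e Hin).
    assert (0 < alpha e * (elen e - / INR n)).
    { apply Rmult_lt_0_compat. pose proof (Hpos e He); lra. destruct He as [_ Hl]. unfold Rdiv in Hl. lra. }
    rewrite Hconv. apply Rmult_lt_compat_l; lra.
Qed.

Theorem mainTheorem15 (d n : nat) (hd : (1 <= d)%nat) (hn : (1 <= n)%nat) :
  (* (1) every finite transversal C ⊆ X of H has |C| >= n d^2 - d *)
  (forall C : list point,
      NoDup C -> Forall (in_X d) C ->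
      (forall e, inH d n e -> exists p, In p C /\ memb p e = true) ->
      (length C + d >= n * d * d)%nat) /\
  (* (2) fractional matchings: finitely supported alpha : H -> R_{>=0} *)
  (forall (alpha : edge -> R) (s : list edge),
      NoDup s ->
      (forall e, In e s -> inH d n e) ->
      (forall e, inH d n e -> 0 <= alpha e) ->
      (forall e, inH d n e -> ~ In e s -> alpha e = 0) ->
      (forall p, in_X d p -> load alpha s p <= 1) ->
      total alpha s <= INR (n * d) /\
      ((exists e, inH d n e /\ alpha e <> 0) -> total alpha s < INR (n * d))).
Proof.
  split.
  - intros C _ HF Hhit. exact (part1 d n hd hn C HF Hhit).
  - intros alpha s _ Hs Hpos Hzero Hload. exact (part2 d n hd hn alpha s Hs Hpos Hzero Hload).
Qed.
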